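(* Let $p_k\ge0$ ($k\ge1$) with $\sum_k p_k=1$ and $Q_1=\sum_k kp_k<\infty$, let $Q(z)=\sum_k p_kz^k$, and for $q\in(0,1)$ define $\kappa(q)>0$ by $$-\log\kappa(q)=\int_0^{1-q}\Big(\frac{Q_1}{1-Q(z)}-\frac{1}{1-z}\Big)\,dz.$$ Then $\kappa(q)\to0$ as $q\to0$ if and only if $\sum_{k=1}^\infty p_k\,k\log k=\infty$. *)

(* Defs.v *)
From Stdlib Require Import Reals.
From Coquelicot Require Import Coquelicot.
Open Scope R_scope.

(* The offspring distribution is p_k, k >= 1, given by p : nat -> R;
   the value p 0 is never used: all sums range over k >= 1,
   written as sums over n >= 0 of the term at k = S n. *)

Definition Qgf (p : nat -> R) (z : R) : R :=
  Series (fun n => p (S n) * z ^ (S n)).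

Definition Q1 (p : nat -> R) : R :=
  Series (fun n => INR (S n) * p (S n)).

Definition kappa (p : nat -> R) (q : R) : R :=
  exp (- RInt (fun z => Q1 p / (1 - Qgf p z) - 1 / (1 - z)) 0 (1 - q)).

(* Main.v *)
Require Import Defs.
From Stdlib Require Import Reals Lra Lia Classical.
From Coquelicot Require Import Coquelicot.
Open Scope R_scope.

Fixpoint geo (k:nat) (z:R) : R := match k with O => 0 | S j => geo j z + z^j end.
Fixpoint Pk (k:nat) (z:R) : R := match k with O => 0 | S j => Pk j z + geo j z end.
Fixpoint geoI (k:nat) (x:R) : R := match k with O => 0 | S j => geoI j x + x^(S j)/INR (S j) end.
Fixpoint PkI (k:nat) (x:R) : R := match k with O => 0 | S j => PkI j x + geoI j x end.

Lemma geo_id k z : (1 - z) * geo k z = 1 - z^k.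
Proof. induction k; simpl; [ring | ]. rewrite Rmult_plus_distr_l, IHk. ring. Qed.

Lemma Pk_id k z : (1 - z)^2 * Pk k z = INR k * (1 - z) - (1 - z^k).
Proof.
  induction k; simpl Pk; [simpl; ring | ].
  rewrite Rmult_plus_distr_l, IHk.
  replace ((1-z)^2 * geo k z) with ((1-z)*((1-z)*geo k z)) by ring.
  rewrite geo_id, S_INR. simpl. ring.
Qed.

Lemma geo_ge0 k z : 0 <= z -> 0 <= geo k z.
Proof. intro. induction k; simpl; [lra | ]. pose proof (pow_le z k H). lra. Qed.
Lemma Pk_ge0 k z : 0 <= z -> 0 <= Pk k z.
Proof. intro. induction k; simpl; [lra | ]. pose proof (geo_ge0 k z H). lra. Qed.

Lemma is_RInt_pow j x : is_RInt (fun y => y^j) 0 x (x^(S j)/INR (S j)).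
Proof.
  assert (H: is_RInt (fun y => y^j) 0 x (minus (x^(S j)/INR (S j)) (0^(S j)/INR (S j)))).
  { apply (is_RInt_derive (fun y => y^(S j)/INR (S j))).
    - intros y _. 
      assert (HS: INR (S j) <> 0) by (apply not_0_INR; lia).
      auto_derive; [auto | ]. idtac.
      replace (pred (S j)) with j by reflexivity. field. exact HS.
    - intros y _. apply (@ex_derive_continuous R_AbsRing R_NormedModule (fun y => y^j)). auto_derive. auto. }
  replace (x^(S j)/INR (S j)) with (minus (x^(S j)/INR (S j)) (0^(S j)/INR (S j))).
  exact H. unfold minus, plus, opp. simpl. assert (INR (S j) <> 0) by (apply not_0_INR; lia). field. exact H0.
Qed.

Lemma is_RInt_geo k x : is_RInt (geo k) 0 x (geoI k x).
Proof.
  induction k; simpl.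
  - apply (is_RInt_ext (fun _ => 0)). intros; reflexivity.
    replace 0 with (scal (x - 0) 0) at 2 by (unfold scal; simpl; unfold mult; simpl; ring).
    exact (@is_RInt_const R_NormedModule 0 x 0).
  - apply (is_RInt_ext (fun y => plus (geo k y) (y^k))). intros; reflexivity.
    apply (is_RInt_plus _ _ _ _ _ _ IHk (is_RInt_pow k x)).
Qed.

Lemma is_RInt_Pk k x : is_RInt (Pk k) 0 x (PkI k x).
Proof.
  induction k; simpl.
  - apply (is_RInt_ext (fun _ => 0)). intros; reflexivity.
    replace 0 with (scal (x - 0) 0) at 2 by (unfold scal; simpl; unfold mult; simpl; ring).
    exact (@is_RInt_const R_NormedModule 0 x 0).
  - apply (is_RInt_ext (fun y => plus (Pk k y) (geo k y))). intros; reflexivity.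
    apply (is_RInt_plus _ _ _ _ _ _ IHk (is_RInt_geo k x)).
Qed.
Fixpoint Hn (k:nat) : R := match k with O => 0 | S j => Hn j + / INR (S j) end.
Lemma ln_le_sub1 y : 0 < y -> ln y <= y - 1.
Proof.
  intro Hy. destruct (Req_dec y 1) as [->|Hne]. rewrite ln_1; lra.
  assert (H := exp_ineq1 (y - 1)). rewrite <- (ln_exp (y-1)).
  left. apply ln_increasing; [exact Hy | ]. replace y with (1 + (y-1)) at 1 by ring. apply H. lra.
Qed.

Lemma ln_div a b : 0 < a -> 0 < b -> ln (a / b) = ln a - ln b.
Proof. intros. unfold Rdiv. rewrite ln_mult, ln_Rinv; try lra. apply Rinv_0_lt_compat; lra. Qed.

Lemma Hn_ge k : ln (INR (S k)) <= Hn k.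
Proof.
  induction k. simpl. rewrite ln_1. lra.
  change (Hn (S k)) with (Hn k + / INR (S k)). set (a := INR (S k)) in *.
  assert (Ha : 0 < a) by (apply lt_0_INR; lia).
  assert (E: INR (S (S k)) = a + 1) by (unfold a; rewrite (S_INR (S k)); reflexivity).
  rewrite E.
  assert (H1 := ln_le_sub1 ((a+1)/a) ltac:(apply Rdiv_lt_0_compat; lra)).
  rewrite ln_div in H1 by lra.
  replace ((a+1)/a - 1) with (/a) in H1 by (field; repeat split; intro; lra). lra.
Qed.

Lemma Hn_le k : (1 <= k)%nat -> Hn k <= 1 + ln (INR k).
Proof.
  induction k; intro Hk. lia.
  destruct k. simpl. rewrite ln_1. lra.
  specialize (IHk ltac:(lia)).
  change (Hn (S (S k))) with (Hn (S k) + / INR (S (S k))).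
  set (a := INR (S k)) in *.
  assert (Ha : 0 < a) by (apply lt_0_INR; lia).
  assert (E: INR (S (S k)) = a + 1) by (unfold a; rewrite (S_INR (S k)); reflexivity).
  rewrite E.
  assert (H1 := ln_le_sub1 (a/(a+1)) ltac:(apply Rdiv_lt_0_compat; lra)).
  rewrite ln_div in H1 by lra.
  replace (a/(a+1) - 1) with (-/(a+1)) in H1 by (field; repeat split; intro; lra). lra.
Qed.

Lemma Hn_ge0 k : 0 <= Hn k.
Proof. induction k. simpl; lra. change (Hn (S k)) with (Hn k + / INR (S k)). assert (0 < / INR (S k)) by (apply Rinv_0_lt_compat, lt_0_INR; lia). lra. Qed.

Lemma geoI_one j : geoI j 1 = Hn j.
Proof. induction j; simpl geoI; simpl Hn. reflexivity. rewrite IHj, pow1. unfold Rdiv. ring. Qed.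

Lemma PkI_one k : PkI k 1 = INR k * Hn k - INR k.
Proof.
  induction k. simpl. ring.
  simpl PkI. rewrite IHk, geoI_one.
  assert (INR (S k) <> 0) by (apply not_0_INR; lia).
  change (Hn (S k)) with (Hn k + / INR (S k)). rewrite S_INR in *.
  field. exact H.
Qed.

Lemma PkI_one_bounds k : (1 <= k)%nat ->
  INR k * ln (INR k) - INR k <= PkI k 1 <= INR k * ln (INR k).
Proof.
  intro Hk. rewrite PkI_one.
  assert (Hk0 : 0 < INR k) by (apply lt_0_INR; lia).
  assert (H1 := Hn_le k Hk). assert (H2 := Hn_ge k).
  assert (ln (INR k) <= ln (INR (S k))) by (apply ln_le; [lra | apply le_INR; lia]).
  split; [ | nra]. nra.
Qed.

Lemma geoI_ge0 j x : 0 <= x -> 0 <= geoI j x.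
Proof. intro. induction j. simpl; lra. change (geoI (S j) x) with (geoI j x + x^(S j)/INR (S j)).
  assert (0 <= x^(S j)/INR (S j)). { apply Rdiv_le_0_compat. apply pow_le; lra. apply lt_0_INR; lia. } lra. Qed.

Lemma PkI_ge0 k x : 0 <= x -> 0 <= PkI k x.
Proof. intro. induction k; simpl PkI. lra. pose proof (geoI_ge0 k x H). lra. Qed.

Lemma pow_le_one' x n : 0 <= x <= 1 -> x^n <= 1.
Proof. intro. induction n; simpl. lra. assert (0 <= x^n) by (apply pow_le; lra). nra. Qed.

Lemma geoI_bounds j x : 0 <= x <= 1 -> x^j * Hn j <= geoI j x <= Hn j.
Proof.
  intro Hx. induction j. simpl; lra. change (geoI (S j) x) with (geoI j x + x^(S j)/INR (S j)).
  change (Hn (S j)) with (Hn j + / INR (S j)).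
  assert (Hp: 0 <= x^j) by (apply pow_le; lra).
  assert (Hp1: x^j <= 1) by (apply pow_le_one'; lra).
  assert (Hs: 0 < / INR (S j)) by (apply Rinv_0_lt_compat, lt_0_INR; lia).
  assert (HH := Hn_ge0 j). simpl pow. unfold Rdiv.
  assert (H1: x * x^j <= x^j) by nra. assert (H2 : 0 <= x * x^j) by nra.
  assert (H3: x * x^j * Hn j <= x^j * Hn j) by (apply Rmult_le_compat_r; lra).
  assert (H4: x * x^j * / INR (S j) <= / INR (S j)) by nra.
  split; nra.
Qed.

Lemma PkI_bounds k x : 0 <= x <= 1 -> x^k * PkI k 1 <= PkI k x <= PkI k 1.
Proof.
  intro Hx. induction k; simpl PkI. simpl; lra.
  assert (Hp: 0 <= x^k) by (apply pow_le; lra).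
  assert (Hp1: x^k <= 1) by (apply pow_le_one'; lra).
  assert (HH := Hn_ge0 k). assert (HG := geoI_bounds k x Hx). rewrite geoI_one.
  assert (HP := PkI_ge0 k 1 ltac:(lra)). simpl pow.
  assert (H1: x * x^k <= x^k) by nra. assert (H2 : 0 <= x * x^k) by nra.
  assert (H3: x * x^k * PkI k 1 <= x^k * PkI k 1) by (apply Rmult_le_compat_r; lra).
  assert (H4: x * x^k * Hn k <= x^k * Hn k) by (apply Rmult_le_compat_r; lra).
  split; nra.
Qed.
Lemma sum_n_ge0 (a : nat -> R) N : (forall n, 0 <= a n) -> 0 <= sum_n a N.
Proof. intro H. induction N. rewrite sum_O. apply H. rewrite sum_Sn. unfold plus; simpl. specialize (H (S N)). lra. Qed.

Lemma psum_le (a : nat -> R) l : is_series a l -> (forall n, 0 <= a n) -> forall N, sum_n a N <= l.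
Proof.
  intros Hs Hp. apply is_lim_seq_incr_compare. exact Hs.
  intro n. rewrite sum_Sn. unfold plus; simpl. specialize (Hp (S n)). lra.
Qed.

Lemma series_ge0 (a : nat -> R) l : is_series a l -> (forall n, 0 <= a n) -> 0 <= l.
Proof. intros Hs Hp. apply Rle_trans with (sum_n a 0). apply sum_n_ge0, Hp. apply psum_le; auto. Qed.

Lemma term_le_sum (a : nat -> R) N : (forall n, 0 <= a n) -> a N <= sum_n a N.
Proof. intro H. destruct N. rewrite sum_O; lra. rewrite sum_Sn. unfold plus; simpl.
  pose proof (sum_n_ge0 a N H). lra. Qed.


Lemma p_le1 (p : nat -> R) (hpos : forall k, (1 <= k)%nat -> 0 <= p k)
  (hsum : is_series (fun n => p (S n)) 1) n : p (S n) <= 1.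
Proof.
  apply Rle_trans with (sum_n (fun n => p (S n)) n).
  apply (term_le_sum (fun n => p (S n))). intro; apply hpos; lia.
  apply psum_le; auto. intro; apply hpos; lia.
Qed.

Lemma Qgf_series (p : nat -> R) (hpos : forall k, (1 <= k)%nat -> 0 <= p k)
  (hsum : is_series (fun n => p (S n)) 1) z : Rabs z <= 1 ->
  is_series (fun n => p (S n) * z^(S n)) (Qgf p z).
Proof.
  intro Hz. unfold Qgf. apply Series_correct.
  apply (@ex_series_le R_AbsRing R_CompleteNormedModule _ (fun n => p (S n))).
  - intro n. change (norm (p (S n) * z ^ S n)) with (Rabs (p (S n) * z ^ S n)).
    rewrite Rabs_mult, <- RPow_abs. assert (0 <= p (S n)) by (apply hpos; lia).
    rewrite (Rabs_pos_eq (p (S n))) by lra.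
    assert (Rabs z ^ S n <= 1). { clear -Hz. induction (S n); simpl. lra.
      assert (0 <= Rabs z ^ n0) by (apply pow_le, Rabs_pos). pose proof (Rabs_pos z). nra. }
    nra.
  - exists 1. exact hsum.
Qed.

Definition coef (p : nat -> R) (n : nat) : R := match n with O => 0 | S m => p (S m) end.

Lemma Qgf_PSeries (p : nat -> R) (hpos : forall k, (1 <= k)%nat -> 0 <= p k)
  (hsum : is_series (fun n => p (S n)) 1) z : Rabs z <= 1 ->
  Qgf p z = PSeries (coef p) z.
Proof.
  intro Hz. unfold PSeries. rewrite Series_incr_1. simpl coef. 
  rewrite Rmult_0_l, Rplus_0_l. reflexivity.
  exists (0 * z^0 + Qgf p z). apply is_series_decr_1.
  match goal with |- is_series _ ?l => replace l with (Qgf p z) by (unfold plus, opp; simpl; ring) end.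
  eapply is_series_ext; [ | apply (Qgf_series p hpos hsum z Hz)]. intro; reflexivity.
Qed.

Lemma CV_radius_coef (p : nat -> R) (hpos : forall k, (1 <= k)%nat -> 0 <= p k)
  (hsum : is_series (fun n => p (S n)) 1) : Rbar_le 1 (CV_radius (coef p)).
Proof.
  destruct (CV_radius_bounded (coef p)) as [Hub _].
  apply Hub. exists 1. intro n. rewrite pow1, Rmult_1_r.
  destruct n; simpl. rewrite Rabs_R0; lra.
  rewrite Rabs_pos_eq. apply p_le1; auto. apply hpos; lia.
Qed.

Lemma Qgf_continuous (p : nat -> R) (hpos : forall k, (1 <= k)%nat -> 0 <= p k)
  (hsum : is_series (fun n => p (S n)) 1) z : Rabs z < 1 ->
  continuity_pt (Qgf p) z.
Proof.
  intro Hz. apply continuity_pt_ext_loc with (PSeries (coef p)).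
  - assert (Hd : 0 < 1 - Rabs z) by lra.
    exists (mkposreal _ Hd). intros y Hy.
    change (Rabs (y - z) < 1 - Rabs z) in Hy.
    symmetry. apply Qgf_PSeries; auto.
    pose proof (Rabs_triang_inv y z). lra.
  - apply PSeries_continuity.
    pose proof (CV_radius_coef p hpos hsum) as H.
    destruct (CV_radius (coef p)); simpl in *; auto. lra.
Qed.

Ltac toR := match goal with |- ?x = ?y => change (@eq R x y) end.

Lemma sum_n_lin (a b : nat -> R) c N :
  sum_n (fun n => c * a n - b n) N = c * sum_n a N - sum_n b N.
Proof. induction N. rewrite !sum_O. toR; ring. rewrite !sum_Sn, IHN. unfold plus; simpl. toR; ring. Qed.

Lemma sum_n_scal (a : nat -> R) c N : sum_n (fun n => c * a n) N = c * sum_n a N.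
Proof. induction N. rewrite !sum_O. toR; ring. rewrite !sum_Sn, IHN. unfold plus; simpl. toR; ring. Qed.

Lemma is_series_ext2 (a b : nat -> R) la lb :
  is_series a la -> (forall n, a n = b n) -> la = lb -> is_series b lb.
Proof. intros H E L. subst lb. eapply is_series_ext; [exact E | exact H]. Qed.

Definition Kn (p : nat -> R) N : R := sum_n (fun n => INR (S n) * p (S n)) N.
Definition SN (p : nat -> R) N z : R := sum_n (fun n => p (S n) * Pk (S n) z) N.
Definition SI (p : nat -> R) N x : R := sum_n (fun n => p (S n) * PkI (S n) x) N.
Definition Tn (p : nat -> R) N : R := sum_n (fun n => p (S n) * INR (S n) * ln (INR (S n))) N.
Definition fI (p : nat -> R) z := Q1 p / (1 - Qgf p z) - 1 / (1 - z).

Lemma pointwise (p : nat -> R) (hpos : forall k, (1 <= k)%nat -> 0 <= p k)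
  (hsum : is_series (fun n => p (S n)) 1)
  (hQ1 : ex_series (fun n => INR (S n) * p (S n))) N z : 0 <= z < 1 ->
  1 - z <= 1 - Qgf p z /\ 0 < Q1 p /\ SN p N z / Q1 p <= fI p z /\ fI p z <= SN p N z + (Q1 p - Kn p N) / (1 - z).
Proof.
  intro Hz. set (u := 1 - z). assert (Hu : 0 < u) by (unfold u; lra).
  set (Qz := Qgf p z).
  assert (HQ := Qgf_series p hpos hsum z ltac:(rewrite Rabs_pos_eq; lra)). fold Qz in HQ.
  assert (HQ1 : is_series (fun n => INR (S n) * p (S n)) (Q1 p)) by (apply Series_correct; exact hQ1).
  assert (H2 : is_series (fun n => p (S n) * (1 - z^(S n))) (1 - Qz)).
  { apply (is_series_ext2 _ _ _ _ (is_series_minus _ _ _ _ hsum HQ)).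
    intro n. unfold plus, opp; simpl. ring. unfold plus, opp; simpl. ring. }
  assert (H3 : is_series (fun n => p (S n) * (INR (S n) * u - (1 - z^(S n)))) (Q1 p * u - (1 - Qz))).
  { apply (is_series_ext2 _ _ _ _ (is_series_minus _ _ _ _ (is_series_scal u _ _ HQ1) H2)).
    intro n. unfold plus, opp, scal; simpl. unfold mult; simpl. ring.
    unfold plus, opp, scal; simpl. unfold mult; simpl. ring. }
  assert (H5 : is_series (fun n => p (S n) * (z - z^(S n))) (z - Qz)).
  { apply (is_series_ext2 _ _ _ _ (is_series_minus _ _ _ _ (is_series_scal z _ _ hsum) HQ)).
    intro n. unfold plus, opp, scal; simpl. unfold mult; simpl. ring.
    unfold plus, opp, scal; simpl. unfold mult; simpl. ring. }
  assert (Hp : forall n, 0 <= p (S n)) by (intro; apply hpos; lia).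
  assert (Hzn : forall n, 0 <= 1 - z^n) by (intro n; pose proof (pow_le_one' z n ltac:(lra)); lra).
  assert (Hak : forall n, INR (S n) * u - (1 - z^(S n)) = u^2 * Pk (S n) z)
    by (intro n; unfold u; rewrite Pk_id; ring).
  assert (HD : u <= 1 - Qz).
  { assert (0 <= z - Qz); [ | unfold u; lra].
    apply (series_ge0 _ _ H5). intro n. apply Rmult_le_pos; auto. simpl.
    specialize (Hzn n). nra. }
  assert (HG : 0 <= Q1 p * u - (1 - Qz)).
  { apply (series_ge0 _ _ H3). intro n. apply Rmult_le_pos; auto. rewrite Hak.
    apply Rmult_le_pos. nra. apply Pk_ge0; lra. }
  set (A := sum_n (fun n => p (S n) * (INR (S n) * u - (1 - z^(S n)))) N).
  set (B := sum_n (fun n => p (S n) * (1 - z^(S n))) N).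
  assert (HA : A <= Q1 p * u - (1 - Qz)).
  { apply (psum_le _ _ H3). intro n. apply Rmult_le_pos; auto. rewrite Hak.
    apply Rmult_le_pos. nra. apply Pk_ge0; lra. }
  assert (HB : B <= 1 - Qz) by (apply (psum_le _ _ H2); intro n; apply Rmult_le_pos; auto).
  assert (HAB : A = u * Kn p N - B).
  { unfold A, B, Kn. rewrite <- sum_n_lin. apply sum_n_ext. intro n. toR; ring. }
  assert (HSA : u^2 * SN p N z = A).
  { unfold SN, A. rewrite <- sum_n_scal. apply sum_n_ext. intro n. toR. rewrite Hak. ring. }
  assert (HQ1pos : 0 < Q1 p) by nra.
  assert (Hf : fI p z * ((1 - Qz) * u) = Q1 p * u - (1 - Qz)).
  { unfold fI. fold Qz. fold u. field. split; lra. }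
  assert (Hfpos : 0 <= fI p z).
  { assert (0 < (1 - Qz) * u) by nra. destruct (Rle_lt_dec 0 (fI p z)); auto. nra. }
  split; [exact HD | split; [exact HQ1pos | split]].
  - apply Rmult_le_reg_r with (Q1 p * u^2). nra.
    replace (SN p N z / Q1 p * (Q1 p * u ^ 2)) with (u^2 * SN p N z) by (field; lra).
    rewrite HSA. nra.
  - apply Rmult_le_reg_r with (u^2). nra.
    replace ((SN p N z + (Q1 p - Kn p N) / u) * u^2) with (u^2 * SN p N z + u * (Q1 p - Kn p N))
      by (field; lra).
    rewrite HSA. nra.
Qed.

Lemma is_RInt_SN p N x : is_RInt (SN p N) 0 x (SI p N x).
Proof.
  induction N.
  - unfold SN, SI. apply (is_RInt_ext (fun z => scal (p 1%nat) (Pk 1 z))).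
    intros; rewrite sum_O; reflexivity. rewrite sum_O. exact (@is_RInt_scal R_NormedModule _ _ _ _ _ (is_RInt_Pk 1 x)).
  - unfold SN, SI. apply (is_RInt_ext (fun z => plus (SN p N z) (scal (p (S (S N))) (Pk (S (S N)) z)))).
    intros; rewrite sum_Sn; reflexivity. rewrite sum_Sn.
    exact (@is_RInt_plus R_NormedModule _ _ _ _ _ _ IHN (@is_RInt_scal R_NormedModule _ _ _ _ _ (is_RInt_Pk (S (S N)) x))).
Qed.

Lemma fI_cont (p : nat -> R) (hpos : forall k, (1 <= k)%nat -> 0 <= p k)
  (hsum : is_series (fun n => p (S n)) 1)
  (hQ1 : ex_series (fun n => INR (S n) * p (S n))) z : 0 <= z < 1 ->
  continuous (fI p) z.
Proof.
  intro Hz. destruct (pointwise p hpos hsum hQ1 0 z Hz) as [HD _].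
  apply continuity_pt_filterlim. unfold fI.
  apply continuity_pt_minus.
  - apply continuity_pt_div. apply continuity_pt_const. intros a b; reflexivity.
    apply continuity_pt_minus. apply continuity_pt_const. intros a b; reflexivity.
    apply Qgf_continuous; auto. rewrite Rabs_pos_eq; lra. lra.
  - apply continuity_pt_div. apply continuity_pt_const. intros a b; reflexivity.
    apply continuity_pt_minus. apply continuity_pt_const. intros a b; reflexivity.
    apply continuity_pt_id. lra.
Qed.

Lemma ex_RInt_fI (p : nat -> R) (hpos : forall k, (1 <= k)%nat -> 0 <= p k)
  (hsum : is_series (fun n => p (S n)) 1)
  (hQ1 : ex_series (fun n => INR (S n) * p (S n))) x : 0 <= x < 1 ->
  ex_RInt (fI p) 0 x.
Proof.
  intro Hx. apply (@ex_RInt_continuous R_CompleteNormedModule). intros z Hz.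
  rewrite Rmin_left in Hz by lra. rewrite Rmax_right in Hz by lra.
  apply fI_cont; auto. lra.
Qed.

Lemma int_lower (p : nat -> R) (hpos : forall k, (1 <= k)%nat -> 0 <= p k)
  (hsum : is_series (fun n => p (S n)) 1)
  (hQ1 : ex_series (fun n => INR (S n) * p (S n))) N x : 0 <= x < 1 ->
  SI p N x / Q1 p <= RInt (fI p) 0 x.
Proof.
  intro Hx.
  assert (Hi : is_RInt (fun z => scal (/ Q1 p) (SN p N z)) 0 x (scal (/ Q1 p) (SI p N x)))
    by exact (@is_RInt_scal R_NormedModule _ _ _ _ _ (is_RInt_SN p N x)).
  replace (SI p N x / Q1 p) with (RInt (fun z => scal (/ Q1 p) (SN p N z)) 0 x).
  2:{ rewrite (is_RInt_unique _ _ _ _ Hi). unfold scal; simpl; unfold mult; simpl. unfold Rdiv; ring. }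
  apply RInt_le. lra. eexists; exact Hi. apply ex_RInt_fI; auto.
  intros z Hz. destruct (pointwise p hpos hsum hQ1 N z ltac:(lra)) as [_ [_ [H _]]].
  unfold scal; simpl; unfold mult; simpl. unfold Rdiv in H. lra.
Qed.

Lemma int_upper (p : nat -> R) (hpos : forall k, (1 <= k)%nat -> 0 <= p k)
  (hsum : is_series (fun n => p (S n)) 1)
  (hQ1 : ex_series (fun n => INR (S n) * p (S n))) N q : 0 < q < 1 ->
  RInt (fI p) 0 (1 - q) <= SI p N (1 - q) + (1 - q) * ((Q1 p - Kn p N) / q).
Proof.
  intro Hq. set (c := (Q1 p - Kn p N) / q).
  assert (HK : Kn p N <= Q1 p).
  { apply psum_le. apply Series_correct; exact hQ1. intro n. apply Rmult_le_pos.
    apply pos_INR. apply hpos; lia. }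
  assert (Hi : is_RInt (fun z => plus (SN p N z) c) 0 (1 - q) (plus (SI p N (1 - q)) (scal (1 - q - 0) c)))
    by exact (@is_RInt_plus R_NormedModule _ _ _ _ _ _ (is_RInt_SN p N (1-q)) (@is_RInt_const R_NormedModule 0 (1-q) c)).
  replace (SI p N (1 - q) + (1 - q) * c) with (RInt (fun z => plus (SN p N z) c) 0 (1 - q)).
  2:{ rewrite (is_RInt_unique _ _ _ _ Hi). unfold scal, plus; simpl; unfold mult; simpl. ring. }
  apply RInt_le. lra. apply ex_RInt_fI; auto; lra. eexists; exact Hi.
  intros z Hz. destruct (pointwise p hpos hsum hQ1 N z ltac:(lra)) as [_ [_ [_ H]]].
  unfold plus; simpl. unfold c.
  assert ((Q1 p - Kn p N) / (1 - z) <= (Q1 p - Kn p N) / q).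
  { unfold Rdiv. apply Rmult_le_compat_l. lra. apply Rinv_le_contravar; lra. }
  lra.
Qed.

Lemma sum_SnR (a : nat -> R) n : sum_n a (S n) = sum_n a n + a (S n).
Proof. exact (@sum_Sn R_AbelianMonoid a n). Qed.

Lemma SI_ge0 (p : nat -> R) (hpos : forall k, (1 <= k)%nat -> 0 <= p k) N x : 0 <= x ->
  0 <= SI p N x.
Proof. intro. apply sum_n_ge0. intro n. apply Rmult_le_pos. apply hpos; lia. apply PkI_ge0; auto. Qed.

Lemma SI_bounds (p : nat -> R) (hpos : forall k, (1 <= k)%nat -> 0 <= p k) N x : 0 <= x <= 1 ->
  x^(S N) * SI p N 1 <= SI p N x <= SI p N 1.
Proof.
  intro Hx. induction N.
  - unfold SI. rewrite !sum_O. assert (H := PkI_bounds 1 x Hx). assert (0 <= p 1%nat) by (apply hpos; lia).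
    split; nra.
  - unfold SI in *. rewrite !sum_SnR.
    set (a := sum_n (fun n : nat => p (S n) * PkI (S n) 1) N) in *.
    assert (Ha : 0 <= a) by (apply (SI_ge0 p hpos N 1); lra).
    assert (H := PkI_bounds (S (S N)) x Hx). assert (Hp : 0 <= p (S (S N))) by (apply hpos; lia).
    assert (Hx1 : 0 <= x^(S N)) by (apply pow_le; lra).
    assert (Hx2 : x * x^(S N) <= x^(S N)) by nra.
    assert (HP : 0 <= PkI (S (S N)) 1) by (apply PkI_ge0; lra).
    change (x ^ S (S N)) with (x * x^(S N)) in *.
    assert (x * x^(S N) * a <= x^(S N) * a) by (apply Rmult_le_compat_r; lra).
    assert (p (S (S N)) * (x * x ^ S N * PkI (S (S N)) 1) <= p (S (S N)) * PkI (S (S N)) x)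
      by (apply Rmult_le_compat_l; lra).
    assert (p (S (S N)) * PkI (S (S N)) x <= p (S (S N)) * PkI (S (S N)) 1)
      by (apply Rmult_le_compat_l; lra).
    split; nra.
Qed.

Lemma SI1_bounds (p : nat -> R) (hpos : forall k, (1 <= k)%nat -> 0 <= p k) N :
  Tn p N - Kn p N <= SI p N 1 <= Tn p N.
Proof.
  unfold Tn, Kn, SI. induction N.
  - rewrite !sum_O. assert (H := PkI_one_bounds 1 ltac:(lia)). assert (0 <= p 1%nat) by (apply hpos; lia).
    split; nra.
  - rewrite !sum_SnR.
    assert (H := PkI_one_bounds (S (S N)) ltac:(lia)). assert (0 <= p (S (S N))) by (apply hpos; lia).
    split; nra.
Qed.

Lemma Tn_mono (p : nat -> R) (hpos : forall k, (1 <= k)%nat -> 0 <= p k) n m : (n <= m)%nat -> Tn p n <= Tn p m.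
Proof.
  induction 1. lra. unfold Tn in *. rewrite sum_SnR.
  assert (0 <= p (S (S m))) by (apply hpos; lia).
  assert (0 <= ln (INR (S (S m)))) by (rewrite <- ln_1; apply ln_le; [lra | apply (le_INR 1); lia]).
  assert (0 <= INR (S (S m))) by apply pos_INR.
  assert (0 <= p (S (S m)) * INR (S (S m)) * ln (INR (S (S m)))) by (apply Rmult_le_pos; [apply Rmult_le_pos|]; lra).
  lra.
Qed.

Lemma bernoulli_low q n : 0 <= q <= 1 -> 1 - INR n * q <= (1 - q)^n.
Proof.
  intro Hq. induction n. simpl; lra. rewrite S_INR. simpl pow.
  assert (0 <= INR n) by apply pos_INR.
  assert ((1-q)*(1 - INR n * q) <= (1-q)*(1-q)^n) by (apply Rmult_le_compat_l; lra). nra.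
Qed.

Lemma exp_le' a b : a <= b -> exp a <= exp b.
Proof. intro H. destruct (Rle_lt_or_eq_dec a b H) as [h|h]. left; apply exp_increasing; auto. subst; lra. Qed.

Lemma kappa_eq p q : kappa p q = exp (- RInt (fI p) 0 (1 - q)).
Proof. reflexivity. Qed.

Theorem lemma3p7 (p : nat -> R)
  (hpos : forall k, (1 <= k)%nat -> 0 <= p k)
  (hsum : is_series (fun n => p (S n)) 1)
  (hQ1 : ex_series (fun n => INR (S n) * p (S n))) :
  filterlim (kappa p) (at_right 0) (locally 0) <->
  is_lim_seq (sum_n (fun n => p (S n) * INR (S n) * ln (INR (S n)))) p_infty.
Proof.
  change (sum_n (fun n => p (S n) * INR (S n) * ln (INR (S n)))) with (Tn p).
  assert (HQ1pos : 0 < Q1 p) by (destruct (pointwise p hpos hsum hQ1 0 0 ltac:(lra)) as [_ [h _]]; exact h).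
  assert (HK : forall N, Kn p N <= Q1 p).
  { intro N. apply psum_le. apply Series_correct; exact hQ1. intro n. apply Rmult_le_pos.
    apply pos_INR. apply hpos; lia. }
  split.
  - intro H. apply is_lim_seq_spec. intro M.
    destruct (classic (exists n, M < Tn p n)) as [[n Hn]|Hno].
    + exists n. intros m Hm. pose proof (Tn_mono p hpos n m Hm). lra.
    + exfalso.
      assert (HT : forall n, Tn p n <= M).
      { intro n. destruct (Rle_lt_dec (Tn p n) M); auto. exfalso; apply Hno; exists n; auto. }
      set (M' := Rmax M 0 + 1).
      assert (HM' : M + 1 <= M') by (unfold M'; pose proof (Rmax_l M 0); lra).
      pose (eps := mkposreal (exp (- M')) (exp_pos _)).
      pose proof (proj1 (@filterlim_locally R R_UniformSpace (at_right 0) _ (kappa p) 0) H eps) as H1. clear H. rename H1 into H.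
      destruct H as [d Hd].
      set (q := Rmin d 1 / 2).
      assert (Hq : 0 < q < 1).
      { unfold q. pose proof (cond_pos d). pose proof (Rmin_r d 1).
        assert (0 < Rmin d 1) by (apply Rmin_glb_lt; lra). lra. }
      assert (Hqd : ball 0 d q).
      { change (Rabs (q - 0) < d). rewrite Rminus_0_r, Rabs_pos_eq by lra.
        unfold q. pose proof (Rmin_l d 1). pose proof (cond_pos d). lra. }
      specialize (Hd q Hqd (proj1 Hq)).
      change (Rabs (kappa p q - 0) < exp (- M')) in Hd.
      assert (HQs : is_lim_seq (Kn p) (Q1 p)) by (apply Series_correct; exact hQ1).
      apply is_lim_seq_spec in HQs. destruct (HQs (mkposreal q (proj1 Hq))) as [N HN].
      specialize (HN N (le_n N)). simpl in HN.
      assert (HKN : Q1 p - Kn p N < q) by (apply Rabs_def2 in HN; lra).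
      pose proof (int_upper p hpos hsum hQ1 N q Hq) as Hup.
      pose proof (SI_bounds p hpos N (1 - q) ltac:(lra)) as [_ HS1].
      pose proof (SI1_bounds p hpos N) as [_ HS2].
      assert (Hc : (1 - q) * ((Q1 p - Kn p N) / q) <= 1).
      { specialize (HK N). assert (0 <= (Q1 p - Kn p N) / q) by (apply Rdiv_le_0_compat; lra).
        assert ((Q1 p - Kn p N) / q <= 1) .
        { apply Rmult_le_reg_r with q. lra. unfold Rdiv. rewrite Rmult_assoc, Rinv_l by lra. lra. }
        assert (0 <= 1 - q <= 1) by lra. nra. }
      specialize (HT N).
      assert (HI : RInt (fI p) 0 (1 - q) <= M') by lra.
      rewrite kappa_eq, Rminus_0_r, Rabs_pos_eq in Hd by (left; apply exp_pos).
      assert (exp (- M') <= exp (- RInt (fI p) 0 (1 - q))) by (apply exp_le'; lra).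
      lra.
  - intro HT. apply filterlim_locally. intro eps.
    set (M := Rmax (- ln eps) 0 + 1).
    assert (HM : - ln eps < M) by (unfold M; pose proof (Rmax_l (- ln eps) 0); lra).
    assert (HM0 : 0 < M) by (unfold M; pose proof (Rmax_r (- ln eps) 0); lra).
    apply is_lim_seq_spec in HT. destruct (HT (2 * Q1 p * M + Q1 p)) as [N HN].
    specialize (HN N (le_n N)).
    assert (HSN : 0 < INR (S N)) by (apply lt_0_INR; lia).
    assert (Hd : 0 < 1 / (2 * (INR (S N) + 1))) by (apply Rdiv_lt_0_compat; lra).
    exists (mkposreal _ Hd). intros q Hqd Hq0.
    change (Rabs (q - 0) < 1 / (2 * (INR (S N) + 1))) in Hqd.
    rewrite Rminus_0_r, Rabs_pos_eq in Hqd by lra.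
    assert (Hq1 : q < 1).
    { apply Rlt_le_trans with (1 := Hqd). apply Rmult_le_reg_r with (2 * (INR (S N) + 1)). lra.
      unfold Rdiv. rewrite Rmult_assoc, Rinv_l by lra. lra. }
    assert (Hnq : INR (S N) * q <= 1 / 2).
    { assert (q * (2 * (INR (S N) + 1)) < 1).
      { replace 1 with (1 / (2 * (INR (S N) + 1)) * (2 * (INR (S N) + 1))) at 2 by (field; lra).
        apply Rmult_lt_compat_r; lra. }
      nra. }
    assert (Hx : 1 / 2 <= (1 - q) ^ S N) by (pose proof (bernoulli_low q (S N) ltac:(lra)); lra).
    pose proof (int_lower p hpos hsum hQ1 N (1 - q) ltac:(lra)) as Hlow.
    pose proof (SI_bounds p hpos N (1 - q) ltac:(lra)) as [HS1 _].
    pose proof (SI1_bounds p hpos N) as [HS2 _].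
    specialize (HK N).
    assert (HSI1 : 2 * Q1 p * M <= SI p N 1) by lra.
    assert (0 <= SI p N 1) by (apply SI_ge0; auto; lra).
    assert ((1/2) * SI p N 1 <= (1-q)^S N * SI p N 1) by (apply Rmult_le_compat_r; lra).
    assert (Q1 p * M <= (1 - q) ^ S N * SI p N 1) by lra.
    assert (HI : M <= RInt (fI p) 0 (1 - q)).
    { apply Rle_trans with (SI p N (1 - q) / Q1 p); [ | exact Hlow].
      apply Rmult_le_reg_r with (Q1 p). lra. unfold Rdiv. rewrite Rmult_assoc, Rinv_l by lra. lra. }
    change (Rabs (kappa p q - 0) < eps).
    rewrite kappa_eq, Rminus_0_r, Rabs_pos_eq by (left; apply exp_pos).
    rewrite <- (exp_ln eps) by apply cond_pos.
    apply exp_increasing. lra.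
Qed.
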